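(* Let $k$ and $\tau$ be integers with $k \ge 1$ and $1 \le \tau \le k$. Let $G$ be obtained from a complete bipartite graph with bipartition $(A,B)$, where $|A| \ge 4k$ and $|B| \ge 4k$, by adding all edges among some set of $2k-1$ vertices of $A$ (forming a clique) and all edges among some set $T$ of $\tau$ vertices of $B$. Let $S \subseteq B$ be a set of $k$ vertices with $T \subseteq S$. Then $\tau(G[S]) = \tau - 1$, $G$ does not contain $k$ pairwise vertex-disjoint odd $S$-cycles, and there is no set $X$ of at most $2k-3+\tau(G[S])$ vertices such that $G - X$ is bipartite.
   Context: All graphs are finite and simple. An $S$-cycle is a cycle containing at least one vertex of $S$. For a graph $H$, $\tau(H)$ denotes the vertex cover number of $H$ (minimum size of a vertex set meeting every edge). *)

(* Defs.v *)
From mathcomp Require Import all_boot.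
Set Implicit Arguments. Unset Strict Implicit. Unset Printing Implicit Defensive.

(* A simple graph on a finite type V is a symmetric irreflexive rel e. *)

Definition is_vcover (V : finType) (e : rel V) (S X : {set V}) : bool :=
  (X \subset S) &&
  [forall x in S, forall y in S, e x y ==> (x \in X) || (y \in X)].

(* tau(G[S]) : minimum size of a vertex cover of G[S] (S itself is one). *)
Definition vc_num (V : finType) (e : rel V) (S : {set V}) : nat :=
  \big[minn/#|S|]_(X : {set V} | is_vcover e S X) #|X|.

Definition is_graph_cycle (V : finType) (e : rel V) (c : seq V) : bool :=
  [&& uniq c, 3 <= size c & cycle e c].

Definition odd_S_cycle (V : finType) (e : rel V) (S : {set V}) (c : seq V) : bool :=
  [&& is_graph_cycle e c, odd (size c) & has (mem S) c].

Definition bipartite_minus (V : finType) (e : rel V) (X : {set V}) : Prop :=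
  exists col : V -> bool,
    forall x y, x \notin X -> y \notin X -> e x y -> col x != col y.

(* Main.v *)
Require Import Defs.
From mathcomp Require Import all_boot zify.

Lemma sum_disj (V : finType) k (D : {set V}) (P : 'I_k -> {set V}) :
  (forall i j, i != j -> [disjoint P i & P j]) ->
  \sum_i #|D :&: P i| <= #|D|.
Proof.
move=> dis.
have dis' : forall i j, i != j -> [disjoint D :&: P i & D :&: P j].
  move=> i j ij; apply: disjointWl (subsetIr _ _) _.
  exact: disjointWr (subsetIr _ _) (dis i j ij).
have := partition_disjoint_bigcup addn (fun _ => 1) dis'.
rewrite sum1_card => E.
under eq_bigr => i _ do rewrite -sum1_card.
rewrite -E; apply: subset_leq_card; apply/bigcupsP => i _; exact: subsetIl.
Qed.

Lemma le1 (V : finType) (D : {set V}) :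
  (forall u v, u \in D -> v \in D -> u != v -> False) -> #|D| <= 1.
Proof.
move=> H; rewrite leqNgt; apply/negP => /card_gt1P [x [y [xD yD xy]]].
exact: H xD yD xy.
Qed.

Lemma parity (V : eqType) (col : V -> bool) x p :
  path (fun a b => col a != col b) x p -> col (last x p) = col x (+) odd (size p).
Proof.
elim: p x => [|y p IH] x /=; first by rewrite addbF.
case/andP => h /IH ->.
by move: h; case: (col x); case: (col y); case: (odd (size p)).
Qed.

Lemma odd_cycle_mono (V : finType) (e : rel V) (col : V -> bool) c :
  cycle e c -> odd (size c) ->
  exists a b, [/\ a \in c, b \in c, e a b & col a = col b].
Proof.
case: c => [|x p] //= cyc oddc.
case: (boolP [exists a, exists b, [&& a \in x :: p, b \in x :: p, e a b & col a == col b]]).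
  move=> /existsP [a /existsP [b /and4P [h1 h2 h3 /eqP h4]]].
  by exists a, b.
rewrite negb_exists => /forallP H.
have sub : {in mem (x :: p) &, subrel e (fun a b => col a != col b)}.
  move=> a b ha hb eab; apply/negP => cab.
  move: (H a); rewrite negb_exists => /forallP /(_ b).
  by rewrite ha hb eab cab.
have allp : all (mem (x :: p)) (x :: rcons p x).
  apply/allP => y; rewrite /= inE mem_rcons inE; by case/orP=> [->|->]; rewrite ?orbT.
have := sub_in_path sub allp cyc.
move/parity; rewrite last_rcons size_rcons /=.
move: oddc; case: (odd (size p)) => //= _.
by case: (col x).
Qed.

Lemma bigmin_le (I : eqType) (r : seq I) (P : pred I) (F : I -> nat) d x0 :
  x0 \in r -> P x0 -> \big[minn/d]_(X <- r | P X) F X <= F x0.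
Proof.
elim: r => [|y r IH] //; rewrite inE big_cons => /orP [/eqP <-|xr] Px.
  by rewrite Px geq_minl.
case: (P y); last exact: IH.
exact: leq_trans (geq_minr _ _) (IH xr Px).
Qed.

Lemma ar1 m n : 0 < m -> 2 <= n -> 4 <= 2*m + n. Proof. lia. Qed.
Lemma ar2 m n : 2 <= m -> 4 <= 2*m + n. Proof. lia. Qed.
Lemma ar3 k a b : 4*k <= 2*a + b -> a <= k -> b <= 2*k-1 -> 1 <= k -> False.
Proof. lia. Qed.
Lemma ar4 x k tau c t cx tx d1 d2 :
  x + 3 <= 2 * k + (tau - 1) -> 1 <= k -> 1 <= tau ->
  c = 2 * k - 1 -> t = tau -> cx + d1 = c -> tx + d2 = t -> d1 <= 1 -> d2 <= 1 ->
  cx + tx <= x -> False.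
Proof. lia. Qed.
Lemma ar5 t x d1 d2 : x + d1 = t -> x <= d2 -> d1 <= 1 -> t - 1 <= d2.
Proof. lia. Qed.

Theorem mainTheorem9 (k tau : nat) (V : finType) (e : rel V)
    (A B C T S : {set V}) :
  1 <= k -> 1 <= tau <= k ->
  [disjoint A & B] -> A :|: B = [set: V] ->
  4 * k <= #|A| -> 4 * k <= #|B| ->
  C \subset A -> #|C| = 2 * k - 1 ->
  T \subset B -> #|T| = tau ->
  (forall x y, e x y =
     (x != y) &&
     [|| (x \in A) && (y \in B), (x \in B) && (y \in A),
         (x \in C) && (y \in C) | (x \in T) && (y \in T)]) ->
  S \subset B -> #|S| = k -> T \subset S ->
  [/\ vc_num e S = tau - 1,
      ~ (exists cs : 'I_k -> seq V,
           (forall i, odd_S_cycle e S (cs i)) /\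
           (forall i j, i != j -> [disjoint cs i & cs j]))
    & ~ (exists X : {set V}, #|X| + 3 <= 2 * k + vc_num e S /\ bipartite_minus e X)].
Proof.
move=> k1 /andP [t1 tk] dAB cov cA cB CA cC TB cT He SB cS TS.
have inB : forall x, (x \in B) = ~~ (x \in A).
  move=> x; move/setP: cov => /(_ x); rewrite !inE => h.
  case xA: (x \in A); last by move: h; rewrite xA.
  apply/negP => xB.
  by move: dAB; rewrite -setI_eq0 => /eqP /setP /(_ x); rewrite !inE xA xB.
have inC : forall x, x \in C -> x \in A by move=> x; apply: (subsetP CA).
have inT : forall x, x \in T -> x \in B by move=> x; apply: (subsetP TB).
have inS : forall x, x \in S -> x \in B by move=> x; apply: (subsetP SB).
have inTS : forall x, x \in T -> x \in S by move=> x; apply: (subsetP TS).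
have mono : forall x y, e x y -> (x \in A) = (y \in A) ->
    x != y /\ ((x \in C /\ y \in C) \/ (x \in T /\ y \in T)).
  move=> x y; rewrite He => /andP [nxy H] eqA; split => //.
  case/or4P: H => /andP [h1 h2].
  - by rewrite inB in h2; rewrite h1 (negbTE h2) in eqA.
  - by rewrite inB in h1; rewrite (negbTE h1) h2 in eqA.
  - by left.
  - by right.
have vc : vc_num e S = tau - 1.
  have [t tT] : exists t, t \in T by apply/card_gt0P; rewrite cT.
  apply/eqP; rewrite eqn_leq; apply/andP; split.
    have cov0 : is_vcover e S (T :\ t).
      apply/andP; split.
        by apply: subset_trans TS; apply: subsetDl.
      apply/forall_inP => x xS; apply/forall_inP => y yS; apply/implyP => exy.
      have : (x \in A) = (y \in A) by rewrite -[x \in A]negbK -[y \in A]negbK -!inB inS ?inS.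
      case/(mono _ _ exy) => nxy [[xC yC]|[xT yT]].
        by move: (inS _ xS); rewrite inB (inC _ xC).
      rewrite !inE xT yT !andbT.
      case: (x =P t) => [xt|xt]; last by apply/orP; left; apply/eqP.
      apply/orP; right; apply/eqP => yt; move/eqP: nxy; apply; by rewrite xt yt.
    rewrite /vc_num.
    apply: leq_trans (@bigmin_le _ _ _ (fun X : {set V} => #|X|) _ (T :\ t) (mem_index_enum _) cov0) _.
    by have := cardsD1 t T; rewrite tT cT; lia.
  rewrite /vc_num.
  apply: (big_ind (fun m => tau - 1 <= m)).
  - by rewrite cS; apply: leq_trans (leq_subr 1 tau) tk.
  - by move=> m n h1 h2; rewrite leq_min h1 h2.
  move=> X /andP [XS /forall_inP H].
  have h : #|T :\: X| <= 1.
    apply: le1 => u v; rewrite !inE => /andP [uX uT] /andP [vX vT] uv.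
    move: (H u (inTS _ uT)) => /forall_inP /(_ v (inTS _ vT)).
    by rewrite He uv uT vT !orbT /= (negbTE uX) (negbTE vX).
  rewrite -cT; exact: (@ar5 _ _ _ _ (cardsID X T) (subset_leq_card (subsetIr T X)) h).
split => //.
- case=> cs [oc dis].
  pose P i := [set x in cs i].
  have disP : forall i j, i != j -> [disjoint P i & P j].
    move=> i j ij; rewrite -setI_eq0; apply/eqP/setP => x; rewrite !inE.
    apply/negP => /andP [xi xj].
    move: (dis i j ij); rewrite disjoint_has => /hasPn /(_ x xi).
    by rewrite xj.
  have per : forall i, 4 <= 2 * #|S :&: P i| + #|C :&: P i|.
    move=> i; case/and3P: (oc i) => /and3P [_ _ cyc] odd_c /hasP [s sc sS].
    have s1 : 0 < #|S :&: P i| by apply/card_gt0P; exists s; rewrite !inE; apply/andP; split; [exact: sS | exact: sc].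
    have [a [b [ac bc eab eqA]]] := @odd_cycle_mono _ _ (fun x => x \in A) _ cyc odd_c.
    case: (mono _ _ eab eqA) => ab [[aC bC]|[aT bT]].
      have : #|[set a; b]| <= #|C :&: P i|.
        apply: subset_leq_card; apply/subsetP => x; rewrite !inE.
        by case/orP => /eqP ->; rewrite ?aC ?bC ?ac ?bc.
      rewrite cards2 ab => h2; exact: ar1.
    have : #|[set a; b]| <= #|S :&: P i|.
      apply: subset_leq_card; apply/subsetP => x; rewrite !inE.
      by case/orP => /eqP ->; rewrite ?(inTS _ aT) ?(inTS _ bT) ?ac ?bc.
    rewrite cards2 ab => h2; exact: ar2.
  have h4 : \sum_(i < k) 4 <= \sum_(i < k) (2 * #|S :&: P i| + #|C :&: P i|).
    by apply: leq_sum => i _; exact: per.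
  move: h4; rewrite big_split /= -big_distrr /= sum_nat_const card_ord.
  rewrite mulnC => h4.
  apply: (@ar3 _ _ _ h4 _ _ k1); [apply: leq_trans (@sum_disj _ _ S _ disP) _; by rewrite cS | apply: leq_trans (@sum_disj _ _ C _ disP) _; by rewrite cC].
- case=> X [hX [col Hc]].
  rewrite vc in hX.
  have tri : forall u v w, u \notin X -> v \notin X -> w \notin X ->
      e u v -> e u w -> e v w -> False.
    move=> u v w uX vX wX euv euw evw.
    move: (Hc _ _ uX vX euv) (Hc _ _ uX wX euw) (Hc _ _ vX wX evw).
    by case: (col u); case: (col v); case: (col w).
  have [w wB wX] : exists2 w, w \in B & w \notin X.
    case: (boolP (B \subset X)) => [sub|/subsetPn [w wB wX]]; last by exists w.
    have := subset_leq_card sub; lia.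
  have [w' wA wX'] : exists2 w, w \in A & w \notin X.
    case: (boolP (A \subset X)) => [sub|/subsetPn [w' wA wX']]; last by exists w'.
    have := subset_leq_card sub; lia.
  have hC : #|C :\: X| <= 1.
    apply: le1 => u v; rewrite !inE => /andP [uX uC] /andP [vX vC] uv.
    apply: (tri u v w uX vX wX).
    - by rewrite He uv uC vC !orbT.
    - by rewrite He wB (inC _ uC) andbT; case: eqP => // ?; subst; move: wB; rewrite inB inC.
    - by rewrite He wB (inC _ vC) andbT; case: eqP => // ?; subst; move: wB; rewrite inB inC.
  have hT : #|T :\: X| <= 1.
    apply: le1 => u v; rewrite !inE => /andP [uX uT] /andP [vX vT] uv.
    apply: (tri u v w' uX vX wX').
    - by rewrite He uv uT vT !orbT.
    - by rewrite He wA (inT _ uT) /= orbT andbT; case: eqP => // ?; subst; move: (inT _ uT); rewrite inB wA.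
    - by rewrite He wA (inT _ vT) /= orbT andbT; case: eqP => // ?; subst; move: (inT _ vT); rewrite inB wA.
  have dCT : [disjoint C :&: X & T :&: X].
    apply: disjointWl (subsetIl _ _) _; apply: disjointWr (subsetIl _ _) _.
    by apply: disjointWl CA _; apply: disjointWr TB _.
  have := (leq_card_setU (C :&: X) (T :&: X)).2; rewrite dCT => /eqP E.
  have : #|(C :&: X) :|: (T :&: X)| <= #|X|.
    by apply: subset_leq_card; rewrite subUset !subsetIr.
  move=> hX2.
  apply: (@ar4 _ _ _ _ _ _ _ _ _ hX k1 t1 cC cT (cardsID X C) (cardsID X T) hC hT).
  by rewrite -E; apply: leq_trans hX2; rewrite setIC [T :&: _]setIC.
Qed.
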